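(* Let $M$ and $M'$ be two stable matchings in an instance $I$ of SPA-S, and let $M^\land$ be the assignment defined from $M,M'$ in the context. Then $M^\land$ is a stable matching.
   Context: An instance $I$ of SPA-S consists of a finite set $\mathcal{S}$ of students, a finite set $\mathcal{P}$ of projects and a finite set $\mathcal{L}$ of lecturers. Each student $s_i$ ranks a subset $A_i\subseteq\mathcal{P}$ (its acceptable projects) in strict order. Each project is offered by exactly one lecturer; lecturer $l_k$ offers a nonempty set $P_k\subseteq\mathcal{P}$, the $P_k$ partitioning $\mathcal{P}$. Each lecturer $l_k$ ranks in strict order the students who find at least one project of $P_k$ acceptable. Projects have capacities $c_j\in\mathbb{Z}^+$, lecturers have capacities $d_k\in\mathbb{Z}^+$ with $\max\{c_j:p_j\in P_k\}\le d_k\le\sum\{c_j:p_j\in P_k\}$. A pair $(s_i,p_j)$, $p_j$ offered by $l_k$, is acceptable if $p_j\in A_i$ and $s_i$ is on $l_k$'s list. A matching $M$ is a set of acceptable pairs with each student in at most one pair, $|M(p_j)|\le c_j$, $|M(l_k)|\le d_k$, where for an assignment $M$ (a set of acceptable pairs), $M(s_i)$, $M(p_j)$, $M(l_k)$ denote the project of $s_i$, the students assigned to $p_j$, and the students assigned to projects of $l_k$. Undersubscribed/full means fewer than/exactly capacity many assigned students. An acceptable pair $(s_i,p_j)\notin M$ ($p_j$ offered by $l_k$) blocks $M$ if ($s_i$ is unassigned or prefers $p_j$ to $M(s_i)$) and one of: (P1) $p_j$ and $l_k$ undersubscribed; (P2) $p_j$ undersubscribed, $l_k$ full, $s_i\in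 M(l_k)$; (P3) $p_j$ undersubscribed, $l_k$ full, $l_k$ prefers $s_i$ to the worst student of $M(l_k)$; (P4) $p_j$ full and $l_k$ prefers $s_i$ to the worst student of $M(p_j)$. $M$ is stable if it is a matching with no blocking pair. Given stable matchings $M,M'$, $M^\land$ is the assignment in which each student unassigned in both $M$ and $M'$ is unassigned, each student assigned to the same project in both is assigned to that project, and every other student is assigned to the better (in her preference) of her projects in $M$ and $M'$. *)

(* Defs.v *)
From mathcomp Require Import all_boot all_order.
Set Implicit Arguments. Unset Strict Implicit. Unset Printing Implicit Defensive.

(* An instance of SPA-S over finite sets of students S, projects P, lecturers L. *)
Record spa_instance (S P L : finType) := SpaInstance {
  acc : S -> P -> bool;
  (* student's strict ranking: smaller rank = more preferred *)
  rankS : S -> P -> nat;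
  offer : P -> L;
  (* lecturer's strict ranking of students: smaller rank = more preferred *)
  rankL : L -> S -> nat;
  cap : P -> nat;
  dcap : L -> nat;
  rankS_inj : forall s p q, acc s p -> acc s q -> rankS s p = rankS s q -> p = q;
  rankL_inj : forall l s t,
      [exists p, (offer p == l) && acc s p] ->
      [exists p, (offer p == l) && acc t p] ->
      rankL l s = rankL l t -> s = t;
  offer_nonempty : forall l, [exists p, offer p == l];
  cap_pos : forall p, 0 < cap p;
  dcap_pos : forall l, 0 < dcap l;
  dcap_ge_max : forall l p, offer p = l -> cap p <= dcap l;
  dcap_le_sum : forall l, dcap l <= \sum_(p | offer p == l) cap p
}.

Section SPA.
Variables (S P L : finType) (I : spa_instance S P L).

Definition on_list (l : L) (s : S) : bool :=
  [exists p, (offer I p == l) && acc I s p].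

Definition acceptable (s : S) (p : P) : bool :=
  acc I s p && on_list (offer I p) s.

Definition sprefers (s : S) (p q : P) : bool := rankS I s p < rankS I s q.
Definition lprefers (l : L) (s t : S) : bool := rankL I l s < rankL I l t.

(* An assignment: each student is in at most one pair, given as an option. *)
Definition assignment := S -> option P.

Definition is_assignment (M : assignment) : Prop :=
  forall s p, M s = Some p -> acceptable s p.

Definition Mp (M : assignment) (p : P) : {set S} := [set s | M s == Some p].
Definition Ml (M : assignment) (l : L) : {set S} :=
  [set s | if M s is Some p then offer I p == l else false].

Definition is_matching (M : assignment) : Prop :=
  is_assignment M /\
  (forall p, #|Mp M p| <= cap I p) /\
  (forall l, #|Ml M l| <= dcap I l).

Definition worst (l : L) (A : {set S}) : option S :=
  [pick t in A | [forall u in A, rankL I l u <= rankL I l t]].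

Definition l_prefers_to_worst (l : L) (s : S) (A : {set S}) : bool :=
  if worst l A is Some w then lprefers l s w else false.

Definition blocks (M : assignment) (s : S) (p : P) : bool :=
  let l := offer I p in
  [&& acceptable s p, M s != Some p,
      (if M s is Some q then sprefers s p q else true) &
      [|| (#|Mp M p| < cap I p) && (#|Ml M l| < dcap I l),
          [&& #|Mp M p| < cap I p, #|Ml M l| == dcap I l & s \in Ml M l],
          [&& #|Mp M p| < cap I p, #|Ml M l| == dcap I l &
              l_prefers_to_worst l s (Ml M l)]
        | (#|Mp M p| == cap I p) && l_prefers_to_worst l s (Mp M p)]].

Definition stable (M : assignment) : Prop :=
  is_matching M /\ forall s p, ~~ blocks M s p.

Definition meet_assignment (M M' : assignment) : assignment := fun s =>
  match M s, M' s with
  | None, None => None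
  | Some p, None => Some p
  | None, Some p' => Some p'
  | Some p, Some p' => if sprefers s p' p then Some p' else Some p
  end.

End SPA.

(* Main.v *)
Require Import Defs.
From mathcomp Require Import all_boot all_order zify.
Set Implicit Arguments. Unset Strict Implicit. Unset Printing Implicit Defensive.

Section Basics.
Variables (S P L : finType) (I : spa_instance S P L).

Lemma not_ltw_all (l : L) (s u : S) (A : {set S}) :
  u \in A -> ~~ l_prefers_to_worst I l s A -> rankL I l u <= rankL I l s.
Proof.
move=> uA; rewrite /l_prefers_to_worst /worst /lprefers.
case: pickP => [w /andP[wA /forallP H] | H].
  rewrite -leqNgt => ws; apply: leq_trans ws.
  by move/implyP: (H u); apply.
case: (arg_maxnP (rankL I l) uA) => w wA Hw.
have wA' : w \in A := wA.
move: (H w) => /=; rewrite wA' /= => /negP; case.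
by apply/forallP => v; apply/implyP => vA; exact: Hw.
Qed.

Lemma ltw_ex (l : L) (s : S) (A : {set S}) :
  l_prefers_to_worst I l s A -> exists2 w, w \in A & rankL I l s < rankL I l w.
Proof.
rewrite /l_prefers_to_worst /worst /lprefers.
case: pickP => [w /andP[wA _] | //] H; by exists w.
Qed.

Lemma Mp_Ml (M : assignment S P) q u : u \in Mp M q -> u \in Ml I M (offer I q).
Proof. by rewrite !inE => /eqP ->. Qed.

Lemma Ml_onlist (M : assignment S P) l u : is_assignment I M ->
  u \in Ml I M l -> on_list I l u.
Proof.
move=> HM; rewrite inE; case E: (M u) => [p|//] /eqP <-.
by move: (HM _ _ E); rewrite /acceptable => /andP[].
Qed.

Lemma rank_inj2 (M M' : assignment S P) l u t : is_assignment I M -> is_assignment I M' ->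
  u \in Ml I M l -> t \in Ml I M' l -> rankL I l u = rankL I l t -> u = t.
Proof.
move=> HM HM' uM tM'; apply: rankL_inj.
  exact: (Ml_onlist HM uM).
exact: (Ml_onlist HM' tM').
Qed.

Lemma NB (M : assignment S P) s q : stable I M -> acceptable I s q -> M s != Some q ->
  (if M s is Some r then sprefers I s q r else true) ->
  (forall u, u \in Mp M q -> rankL I (offer I q) u <= rankL I (offer I q) s) /\
  (#|Mp M q| < cap I q -> [/\ #|Ml I M (offer I q)| = dcap I (offer I q),
      s \notin Ml I M (offer I q) &
      forall u, u \in Ml I M (offer I q) -> rankL I (offer I q) u <= rankL I (offer I q) s]).
Proof.
move=> [[HA [Hp Hl]] Hb] acc neq pref.
move: (Hb s q); rewrite /blocks acc neq pref /=.
move: (Hp q) (Hl (offer I q)).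
set a := #|Mp M q|; set b := #|Ml I M (offer I q)|.
move=> Ha Hbb.
case: (ltnP a (cap I q)) => Hlt /= Hnb.
  have Hbe : b = dcap I (offer I q).
    apply/eqP; rewrite eqn_leq Hbb /= leqNgt; apply/negP => H.
    by move: Hnb; rewrite H.
  move: Hnb; rewrite Hbe eqxx ltnn /= !negb_or => /andP[H2 /andP[H3 _]].
  have H3' : forall u, u \in Ml I M (offer I q) -> rankL I (offer I q) u <= rankL I (offer I q) s.
    by move=> u uA; apply: not_ltw_all uA H3.
  split; first by move=> u /Mp_Ml; exact: H3'.
  by move=> _; split.
have Hae : a == cap I q by rewrite eqn_leq Ha Hlt.
move: Hnb; rewrite Hae /= => H4.
by split; first by move=> u uA; apply: not_ltw_all uA H4.
Qed.

Lemma cardS (pr : pred S) : #|[set s | pr s]| = \sum_s pr s.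
Proof.
rewrite -sum1_card big_mkcond /=; apply: eq_bigr => s _; rewrite inE.
by case: (pr s).
Qed.

Lemma sum_opt (X : assignment S P) (pr : pred S) (Q : pred P) :
  \sum_(q | Q q) #|[set s | pr s && (X s == Some q)]| =
  #|[set s | pr s && (if X s is Some p then Q p else false)]|.
Proof.
under eq_bigr do rewrite cardS.
rewrite exchange_big cardS; apply: eq_bigr => s _ /=.
case E: (X s) => [p|]; last by rewrite andbF big1 // => q _; case: (pr s).
rewrite big_mkcond /= (bigD1 p) //= big1 ?addn0.
  by rewrite eqxx andbT; case: (Q p); case: (pr s).
move=> q /negbTE qp; have -> : (Some p == Some q) = false by apply/eqP => -[e]; rewrite e eqxx in qp.
by rewrite andbF; case: (Q q).
Qed.

Lemma Ml_sum (X : assignment S P) l :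
  #|Ml I X l| = \sum_(q | offer I q == l) #|Mp X q|.
Proof.
rewrite (eq_bigr (fun q => #|[set s | true && (X s == Some q)]|)); last first.
  by move=> q _; apply: eq_card => s; rewrite !inE.
rewrite sum_opt; apply: eq_card => s; rewrite !inE.
by case: (X s).
Qed.

Lemma sum_le_eq (J : finType) (Q : pred J) (f g : J -> nat) :
  (forall i, Q i -> g i <= f i) -> \sum_(i | Q i) f i <= \sum_(i | Q i) g i ->
  forall i, Q i -> f i = g i.
Proof.
move=> Hle Hs i Qi; apply/eqP; rewrite eqn_leq Hle // andbT.
rewrite leqNgt; apply/negP => Hlt; move: Hs; rewrite (bigD1 i) //= [X in _ <= X](bigD1 i) //=.
have Hr : \sum_(j | Q j && (j != i)) g j <= \sum_(j | Q j && (j != i)) f j.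
  by apply: leq_sum => j /andP[Qj _]; exact: Hle.
rewrite leqNgt; move/negP; apply.
by apply: (leq_trans _ (leq_add Hlt Hr)); rewrite addSn.
Qed.

Definition better (s : S) (x y : option P) : bool :=
  if x is Some p then (if y is Some r then sprefers I s p r else true) else false.

End Basics.
Section Pair.
Variables (S P L : finType) (I : spa_instance S P L).
Variables (M M' N : assignment S P).
Hypotheses (HM : stable I M) (HM' : stable I M').
Hypothesis HN0 : forall s, N s = M s \/ N s = M' s.
Hypothesis HNB : forall s, M s != M' s -> N s = M s -> better I s (M s) (M' s).
Hypothesis HNC : forall s, M s != M' s -> N s = M' s -> better I s (M' s) (M s).

Definition Bs s := (M s != M' s) && (N s == M s).
Definition Cs s := (M s != M' s) && (N s == M' s).
Definition XA q := [set s | (M s == M' s) && (M s == Some q)].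
Definition XB q := [set s | Bs s && (M s == Some q)].
Definition XC q := [set s | Cs s && (M s == Some q)].
Definition XB' q := [set s | Bs s && (M' s == Some q)].
Definition XC' q := [set s | Cs s && (M' s == Some q)].

Let rk l s := rankL I l s.

Lemma D_M q : #|Mp M q| = #|XA q| + #|XB q| + #|XC q|.
Proof.
rewrite /Mp /XA /XB /XC !cardS -!big_split /=; apply: eq_bigr => s _.
rewrite /Bs /Cs; case: (HN0 s) => ->; case: (boolP (M s == M' s)) => [/eqP e|ne];
  rewrite ?e ?eqxx ?ne /= ?addn0 ?add0n //.
by rewrite [M' s == M s]eq_sym (negbTE ne).
Qed.


Lemma D_M' q : #|Mp M' q| = #|XA q| + #|XB' q| + #|XC' q|.
Proof.
rewrite /Mp /XA /XB' /XC' !cardS -!big_split /=; apply: eq_bigr => s _.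
rewrite /Bs /Cs; case: (HN0 s) => ->; case: (boolP (M s == M' s)) => [/eqP e|ne];
  rewrite ?e ?eqxx ?ne /= ?addn0 ?add0n //.
all: try by rewrite [M' s == M s]eq_sym (negbTE ne).
Qed.

Lemma D_N q : #|Mp N q| = #|XA q| + #|XB q| + #|XC' q|.
Proof.
rewrite /Mp /XA /XB /XC' !cardS -!big_split /=; apply: eq_bigr => s _.
rewrite /Bs /Cs; case: (HN0 s) => ->; case: (boolP (M s == M' s)) => [/eqP e|ne];
  rewrite ?e ?eqxx ?ne /= ?addn0 ?add0n //.
all: try by rewrite [M' s == M s]eq_sym (negbTE ne).
Qed.

Lemma memXB s q : s \in XB q -> [/\ M s != M' s, N s = M s & M s = Some q].
Proof. by rewrite inE /Bs => /andP[/andP[ne /eqP e] /eqP m]. Qed.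
Lemma memXC s q : s \in XC q -> [/\ M s != M' s, N s = M' s & M s = Some q].
Proof. by rewrite inE /Cs => /andP[/andP[ne /eqP e] /eqP m]. Qed.
Lemma memXB' s q : s \in XB' q -> [/\ M s != M' s, N s = M s & M' s = Some q].
Proof. by rewrite inE /Bs => /andP[/andP[ne /eqP e] /eqP m]. Qed.
Lemma memXC' s q : s \in XC' q -> [/\ M s != M' s, N s = M' s & M' s = Some q].
Proof. by rewrite inE /Cs => /andP[/andP[ne /eqP e] /eqP m]. Qed.

Lemma XB_nb s q : s \in XB q -> [/\ acceptable I s q, M' s != Some q &
   ((if M' s is Some r then sprefers I s q r else true) : bool)].
Proof.
case/memXB => ne e m; split.
- by apply: (HM.1.1 _ _ m).
- by rewrite -m eq_sym.
- by move: (HNB ne e); rewrite m /better; case: (M' s).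
Qed.

Lemma XC'_nb s q : s \in XC' q -> [/\ acceptable I s q, M s != Some q &
   ((if M s is Some r then sprefers I s q r else true) : bool)].
Proof.
case/memXC' => ne e m; split.
- by apply: (HM'.1.1 _ _ m).
- by rewrite -m.
- by move: (HNC ne e); rewrite m /better; case: (M s).
Qed.

Lemma PL s t q : s \in XB q -> t \in XC' q -> False.
Proof.
move=> sB tC.
have [a1 n1 p1] := XB_nb sB; have [a2 n2 p2] := XC'_nb tC.
have [H1 _] := NB HM' a1 n1 p1; have [H2 _] := NB HM a2 n2 p2.
have [ne e m] := memXB sB; have [ne' e' m'] := memXC' tC.
have ts : t \in Mp M' q by rewrite inE m'.
have sm : s \in Mp M q by rewrite inE m.
have E : rankL I (offer I q) s = rankL I (offer I q) t.
  by apply/eqP; rewrite eqn_leq H2 // H1.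
have st := rank_inj2 HM.1.1 HM'.1.1 (Mp_Ml I sm) (Mp_Ml I ts) E.
by subst t; move: ne; rewrite -e e' eqxx.
Qed.

Lemma PJ1 q : #|Mp M q| = cap I q -> #|XC' q| <= #|XC q|.
Proof.
move=> full.
case: (set_0Vmem (XC' q)) => [->|[t tC]]; first by rewrite cards0.
have H0 : XB q = set0.
  by apply/setP => s; rewrite in_set0; apply/negP => sB; exact: (PL sB tC).
have := D_M q; have := D_M' q; have := (HM'.1.2.1 q); rewrite H0 cards0; lia.
Qed.

Lemma PJ1' q : #|Mp M' q| = cap I q -> #|XB q| <= #|XB' q|.
Proof.
move=> full.
case: (set_0Vmem (XB q)) => [->|[s sB]]; first by rewrite cards0.
have H0 : XC' q = set0.
  by apply/setP => t; rewrite in_set0; apply/negP => tC; exact: (PL sB tC).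
have := D_M q; have := D_M' q; have := (HM.1.2.1 q); rewrite H0 cards0; lia.
Qed.

Definition Q2 l := [exists q, [exists t,
  [&& offer I q == l, #|Mp M q| < cap I q & t \in XC' q]]].

Lemma Q2facts l : Q2 l -> exists t, [/\ t \in Ml I M' l, t \notin Ml I M l,
  (forall v, v \in Ml I M l -> rankL I l v <= rankL I l t) & #|Ml I M l| = dcap I l].
Proof.
case/existsP => q /existsP [t /and3P[/eqP oq lt tC]].
have [a n p] := XC'_nb tC.
have [_ H] := NB HM a n p.
case: (H lt) => d nin all.
exists t; rewrite -oq; split => //.
by rewrite inE; case/memXC': tC => _ _ ->.
Qed.

Lemma Q2B l t : t \in Ml I M' l -> t \notin Ml I M l ->
  (forall v, v \in Ml I M l -> rankL I l v <= rankL I l t) ->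
  forall q, offer I q == l -> #|XB q| <= #|XB' q|.
Proof.
move=> tM' tnM all q /eqP oq.
case: (set_0Vmem (XB q)) => [->|[u uB]]; first by rewrite cards0.
apply: PJ1'.
apply/eqP; rewrite eqn_leq HM'.1.2.1 /= leqNgt; apply/negP => lt.
have [a n p] := XB_nb uB.
have [_ H] := NB HM' a n p.
case: (H lt) => _ _ all'.
have [ne e m] := memXB uB.
have uM : u \in Ml I M l by rewrite inE m oq.
rewrite oq in all'.
have E : rankL I l u = rankL I l t by apply/eqP; rewrite eqn_leq all // all'.
have ut := rank_inj2 HM.1.1 HM'.1.1 uM tM' E.
by subst u; rewrite uM in tnM.
Qed.

Lemma notQ2_le l : ~~ Q2 l -> forall q, offer I q == l -> #|XC' q| <= #|XC q|.
Proof.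
move=> nq q oq.
case: (ltnP #|Mp M q| (cap I q)) => lt.
  case: (set_0Vmem (XC' q)) => [->|[t tC]]; first by rewrite cards0.
  by case/negP: nq; apply/existsP; exists q; apply/existsP; exists t; rewrite oq lt tC.
apply: PJ1; apply/eqP; rewrite eqn_leq lt andbT; exact: HM.1.2.1.
Qed.

Lemma sumD_M l : \sum_(q | offer I q == l) #|Mp M q| =
  \sum_(q | offer I q == l) #|XA q| + \sum_(q | offer I q == l) #|XB q|
  + \sum_(q | offer I q == l) #|XC q|.
Proof. by rewrite -!big_split; apply: eq_bigr => q _; exact: D_M. Qed.
Lemma sumD_M' l : \sum_(q | offer I q == l) #|Mp M' q| =
  \sum_(q | offer I q == l) #|XA q| + \sum_(q | offer I q == l) #|XB' q|
  + \sum_(q | offer I q == l) #|XC' q|.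
Proof. by rewrite -!big_split; apply: eq_bigr => q _; exact: D_M'. Qed.
Lemma sumD_N l : \sum_(q | offer I q == l) #|Mp N q| =
  \sum_(q | offer I q == l) #|XA q| + \sum_(q | offer I q == l) #|XB q|
  + \sum_(q | offer I q == l) #|XC' q|.
Proof. by rewrite -!big_split; apply: eq_bigr => q _; exact: D_N. Qed.

Lemma LI l : \sum_(q | offer I q == l) #|XC' q| <= \sum_(q | offer I q == l) #|XC q|.
Proof.
case: (boolP (Q2 l)) => [hq|nq]; last by apply: leq_sum; exact: notQ2_le.
have [t [tM' tnM all d]] := Q2facts hq.
have s1 : \sum_(q | offer I q == l) #|XB q| <= \sum_(q | offer I q == l) #|XB' q|
  by apply: leq_sum; exact: (Q2B tM' tnM all).
have := HM'.1.2.2 l; rewrite Ml_sum sumD_M'; move: d; rewrite Ml_sum sumD_M; lia.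
Qed.

Lemma sumC_glob : \sum_q #|XC q| <= \sum_q #|XC' q|.
Proof.
rewrite /XC /XC' (sum_opt M Cs predT) (sum_opt M' Cs predT).
apply: subset_leq_card; apply/subsetP => s; rewrite !inE => /andP[cs _].
rewrite cs /=; move: cs => /andP[ne /eqP e]; move: (HNC ne e); rewrite /better.
by case: (M' s).
Qed.

Lemma Eq_l l : \sum_(q | offer I q == l) #|XC q| = \sum_(q | offer I q == l) #|XC' q|.
Proof.
pose f l := \sum_(q | offer I q == l) #|XC q|.
pose g l := \sum_(q | offer I q == l) #|XC' q|.
apply: (@sum_le_eq L predT f g (fun l _ => LI l)) => //.
have part : forall F : P -> nat, \sum_q F q = \sum_l \sum_(q | offer I q == l) F q.
  by move=> F; rewrite (partition_big (offer I) predT).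
rewrite /f /g -(part (fun q => #|XC q|)) -(part (fun q => #|XC' q|)).
exact: sumC_glob.
Qed.

Lemma LemmaL l :
  (exists t, [/\ t \in Ml I M' l, t \notin Ml I M l,
     (forall v, v \in Ml I M l -> rankL I l v <= rankL I l t), #|Ml I M l| = dcap I l &
     forall q, offer I q == l -> #|XB q| = #|XB' q|]) \/
  (forall q, offer I q == l -> #|XC q| = #|XC' q|).
Proof.
case: (boolP (Q2 l)) => [hq|nq]; last first.
  right; apply: sum_le_eq; first exact: notQ2_le.
  by rewrite Eq_l.
left; have [t [tM' tnM all d]] := Q2facts hq; exists t; split => //.
move=> q oq; symmetry; move: q oq.
apply: sum_le_eq; first exact: (Q2B tM' tnM all).
have := HM'.1.2.2 l; rewrite Ml_sum sumD_M'; move: d; rewrite Ml_sum sumD_M.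
have := Eq_l l; lia.
Qed.

Lemma Ml_N_eq l : #|Ml I N l| = #|Ml I M l|.
Proof. by rewrite !Ml_sum sumD_N sumD_M Eq_l. Qed.

Lemma capN q : #|Mp N q| <= cap I q.
Proof.
rewrite D_N; case: (set_0Vmem (XB q)) => [H0|[s sB]].
  by rewrite H0 cards0; have := D_M' q; have := HM'.1.2.1 q; lia.
have H0 : XC' q = set0.
  by apply/setP => t; rewrite in_set0; apply/negP => tC; exact: (PL sB tC).
by rewrite H0 cards0; have := D_M q; have := HM.1.2.1 q; lia.
Qed.

Lemma prefM s p : N s != Some p ->
  ((if N s is Some r then sprefers I s p r else true) : bool) ->
  M s != Some p /\ ((if M s is Some r then sprefers I s p r else true) : bool).
Proof.
move=> nN pN; case: (HN0 s) => e; first by rewrite -e.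
case: (boolP (M s == M' s)) => [/eqP E|ne]; first by rewrite E -e.
move: (HNC ne e) nN pN; rewrite /better e /sprefers.
case: (M' s) => [r'|] //; case: (M s) => [r|] // h1 _ h3.
by split; [apply/eqP => -[er]; subst r; lia | lia].
Qed.

Lemma prefM' s p : N s != Some p ->
  ((if N s is Some r then sprefers I s p r else true) : bool) ->
  M' s != Some p /\ ((if M' s is Some r then sprefers I s p r else true) : bool).
Proof.
move=> nN pN; case: (HN0 s) => e; last by rewrite -e.
case: (boolP (M s == M' s)) => [/eqP E|ne]; first by rewrite -E -e.
move: (HNB ne e) nN pN; rewrite /better e /sprefers.
case: (M s) => [r'|] //; case: (M' s) => [r|] // h1 _ h3.
by split; [apply/eqP => -[er]; subst r; lia | lia].
Qed.

Lemma Key s p w : acceptable I s p -> M s != Some p ->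
  ((if M s is Some r then sprefers I s p r else true) : bool) -> M' s != Some p ->
  ((if M' s is Some r then sprefers I s p r else true) : bool) ->
  #|Mp N p| < cap I p -> w \in Ml I M (offer I p) ->
  (w == s) || (rankL I (offer I p) s < rankL I (offer I p) w) -> False.
Proof.
move=> a n1 p1 n2 p2 lt wM hw.
have [H1a H1b] := NB HM a n1 p1; have [H2a H2b] := NB HM' a n2 p2.
have fullM : #|Mp M p| = cap I p.
  apply/eqP; rewrite eqn_leq HM.1.2.1 /= leqNgt; apply/negP => lt'.
  case: (H1b lt') => _ nin all.
  case/orP: hw => [/eqP ws|sw]; first by subst w; rewrite wM in nin.
  by have := all w wM; lia.
case: (LemmaL (offer I p)) => [[t [tM' tnM allt d HB]]|HC].
  have fullM' : #|Mp M' p| = cap I p.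
    apply/eqP; rewrite eqn_leq HM'.1.2.1 /= leqNgt; apply/negP => lt'.
    case: (H2b lt') => _ _ all'.
    have h1 := all' t tM'; have h2 := allt w wM.
    case/orP: hw => [/eqP ws|sw]; last by lia.
    subst w; have E : rankL I (offer I p) s = rankL I (offer I p) t by lia.
    have st := rank_inj2 HM.1.1 HM'.1.1 wM tM' E.
    by subst t; rewrite wM in tnM.
  by move: lt; rewrite D_N (HB p (eqxx _)) -D_M' fullM' ltnn.
by move: lt; rewrite D_N -(HC p (eqxx _)) -D_M fullM ltnn.
Qed.

Lemma P1lemma s p : acceptable I s p -> M s != Some p ->
  ((if M s is Some r then sprefers I s p r else true) : bool) ->
  #|Mp N p| < cap I p -> #|Ml I N (offer I p)| < dcap I (offer I p) -> False.
Proof.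
move=> a n1 p1 lt; rewrite Ml_N_eq => ltl.
have [_ H1b] := NB HM a n1 p1.
have fullM : #|Mp M p| = cap I p.
  apply/eqP; rewrite eqn_leq HM.1.2.1 /= leqNgt; apply/negP => lt'.
  by case: (H1b lt') => d _ _; lia.
case: (LemmaL (offer I p)) => [[t [_ _ _ d _]]|HC]; first by lia.
by move: lt; rewrite D_N -(HC p (eqxx _)) -D_M fullM ltnn.
Qed.

Lemma P4lemma s p w : acceptable I s p -> M s != Some p ->
  ((if M s is Some r then sprefers I s p r else true) : bool) -> M' s != Some p ->
  ((if M' s is Some r then sprefers I s p r else true) : bool) ->
  w \in Mp N p -> rankL I (offer I p) s < rankL I (offer I p) w -> False.
Proof.
move=> a n1 p1 n2 p2 wN sw.
have [H1a _] := NB HM a n1 p1; have [H2a _] := NB HM' a n2 p2.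
move: wN; rewrite inE => /eqP wN.
case: (HN0 w) => e.
  by have := H1a w; rewrite inE -e wN eqxx => /(_ isT); lia.
by have := H2a w; rewrite inE -e wN eqxx => /(_ isT); lia.
Qed.

End Pair.

Unset Implicit Arguments.

Theorem lemma8 (S P L : finType) (I : spa_instance S P L) (M M' : S -> option P) :
  stable I M -> stable I M' -> stable I (meet_assignment I M M').
Proof.
move=> HM HM'.
set N := meet_assignment I M M'.
have HN0 : forall s, N s = M s \/ N s = M' s.
  move=> s; rewrite /N /meet_assignment.
  case: (M s) => [p|]; case: (M' s) => [p'|]; auto.
  by case: ifP; auto.
have HNB : forall s, M s != M' s -> N s = M s -> better I s (M s) (M' s).
  move=> s; rewrite /N /meet_assignment /better.
  case E1: (M s) => [p|]; case E2: (M' s) => [p'|] //=.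
  case: ifP => h ne.
    by move=> [e]; subst; rewrite eqxx in ne.
  move=> _; move: h; rewrite /sprefers => /negbT; rewrite -leqNgt leq_eqVlt.
  case/orP => [/eqP e|//].
  have a1 := HM.1.1 _ _ E1; have a2 := HM'.1.1 _ _ E2.
  move: a1 a2; rewrite /acceptable => /andP[a1 _] /andP[a2 _].
  by have := rankS_inj a1 a2 e => pe; subst p'; rewrite eqxx in ne.
have HNC : forall s, M s != M' s -> N s = M' s -> better I s (M' s) (M s).
  move=> s; rewrite /N /meet_assignment /better.
  case E1: (M s) => [p|]; case E2: (M' s) => [p'|] //=.
  case: ifP => h ne //.
  by move=> [e]; subst; rewrite eqxx in ne.
have HN0' : forall s, N s = M' s \/ N s = M s by move=> s; case: (HN0 s); auto.
have HNB' : forall s, M' s != M s -> N s = M' s -> better I s (M' s) (M s).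
  by move=> s ne; apply: HNC; rewrite eq_sym.
have HNC' : forall s, M' s != M s -> N s = M s -> better I s (M s) (M' s).
  by move=> s ne; apply: HNB; rewrite eq_sym.
split.
  split; [|split].
  - by move=> s p; case: (HN0 s) => ->; [exact: HM.1.1 | exact: HM'.1.1].
  - by move=> q; exact: (capN HM HM' HN0 HNB HNC).
  - by move=> l; rewrite (Ml_N_eq HM HM' HN0 HNB HNC); exact: HM.1.2.2.
move=> s p; apply/negP; rewrite /blocks => /and4P[a nN pN H].
have [n1 p1] := prefM HN0 HNC nN pN.
have [n2 p2] := prefM' HN0 HNB nN pN.
have gen : #|Mp N p| < cap I p -> forall w, w \in Ml I N (offer I p) ->
    (w == s) || (rankL I (offer I p) s < rankL I (offer I p) w) -> False.
  move=> h1 w wN hw.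
  have [wX|wX] : w \in Ml I M (offer I p) \/ w \in Ml I M' (offer I p).
    by move: wN; rewrite !inE; case: (HN0 w) => ->; auto.
    exact: (Key HM HM' HN0 HNB HNC a n1 p1 n2 p2 h1 wX hw).
  exact: (Key HM' HM HN0' HNB' HNC' a n2 p2 n1 p1 h1 wX hw).
case/or4P: H.
- by case/andP => h1 h2; exact: (P1lemma HM HM' HN0 HNB HNC a n1 p1 h1 h2).
- by case/and3P => h1 _ sin; apply: (gen h1 s sin); rewrite eqxx.
- by case/and3P => h1 _ /ltw_ex [w wN sw]; apply: (gen h1 w wN); rewrite sw orbT.
- by case/andP => _ /ltw_ex [w wN sw]; exact: (P4lemma HM HM' HN0 a n1 p1 n2 p2 wN sw).
Qed.
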